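(* Let $f(1),f(2),\dots$ be a non-negative, non-decreasing sequence of real numbers with $f(1)=0$, and define $a(n):=n\sum_{i=1}^{n} f(i)/i^2$ for $n\ge1$. Then $a(n)\ge 0$ for all $n\ge1$, and for every $n\ge 2$, $$a(n)\le \frac{a(n-1)+a(n+1)}{2}.$$ *)

(* Defs.v *)
From Stdlib Require Import Reals.
Open Scope R_scope.

(* a(n) := n * sum_{i=1}^{n} f(i)/i^2, for n >= 1.
   Written as n * sum_{k=0}^{n-1} f(k+1)/(k+1)^2 using sum_f_R0
   (which sums indices 0..n-1 inclusive, i.e. n terms). *)
Definition a_seq (f : nat -> R) (n : nat) : R :=
  INR n * sum_f_R0 (fun k => f (S k) / (INR (S k)) ^ 2) (Nat.pred n).

(* Main.v *)
Require Import Defs.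
From Stdlib Require Import Reals Lra Lia.
Open Scope R_scope.

Theorem claim6p2 (f : nat -> R)
  (hnonneg : forall i : nat, (1 <= i)%nat -> 0 <= f i)
  (hmono : forall i j : nat, (1 <= i)%nat -> (i <= j)%nat -> f i <= f j)
  (h1 : f 1%nat = 0) :
  (forall n : nat, (1 <= n)%nat -> 0 <= a_seq f n) /\
  (forall n : nat, (2 <= n)%nat ->
     a_seq f n <= (a_seq f (n - 1) + a_seq f (n + 1)) / 2).
Proof.
  split.
  - intros n _. unfold a_seq. apply Rmult_le_pos; [apply pos_INR|].
    apply cond_pos_sum. intro k. unfold Rdiv. apply Rmult_le_pos.
    + apply hnonneg. lia.
    + left. apply Rinv_0_lt_compat. apply pow_lt. apply lt_0_INR. lia.
  - intros n hn. destruct n as [|[|m]]; try lia.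
    replace (S (S m) - 1)%nat with (S m) by lia.
    replace (S (S m) + 1)%nat with (S (S (S m))) by lia.
    unfold a_seq. simpl Nat.pred.
    change (sum_f_R0 (fun k => f (S k) / INR (S k) ^ 2) (S (S m)))
      with (sum_f_R0 (fun k => f (S k) / INR (S k) ^ 2) (S m) + f (S (S (S m))) / INR (S (S (S m))) ^ 2).
    change (sum_f_R0 (fun k => f (S k) / INR (S k) ^ 2) (S m))
      with (sum_f_R0 (fun k => f (S k) / INR (S k) ^ 2) m + f (S (S m)) / INR (S (S m)) ^ 2).
    set (s := sum_f_R0 _ m).
    assert (H0 : 0 <= f (S (S m))) by (apply hnonneg; lia).
    assert (Hm : f (S (S m)) <= f (S (S (S m)))) by (apply hmono; lia).
    set (a := f (S (S m))) in *. set (b := f (S (S (S m)))) in *.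
    rewrite !S_INR. assert (hx := pos_INR m). set (x := INR m) in *.
    assert (key : 0 <= b / (x+1+1+1) - (x+1) * a / ((x+1+1)*(x+1+1))).
    { replace (b / (x+1+1+1) - (x+1) * a / ((x+1+1)*(x+1+1)))
        with (((b - a) * ((x+2)*(x+2)) + a) / ((x+3)*((x+2)*(x+2)))) by (field; lra).
      apply Rmult_le_pos; [nra|]. left. apply Rinv_0_lt_compat. nra. }
    assert (E : ((x + 1) * s + (x + 1 + 1 + 1) * (s + a / (x + 1 + 1) ^ 2 + b / (x + 1 + 1 + 1) ^ 2)) / 2
               - (x + 1 + 1) * (s + a / (x + 1 + 1) ^ 2)
               = (b / (x+1+1+1) - (x+1) * a / ((x+1+1)*(x+1+1))) / 2) by (field; lra).
    lra.
Qed.
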